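(* Let $Q\in\mathbb R^{m\times n}$ with $\mathrm{rank}(Q)=n$, $p\in\mathbb R^m$, $r>0$, and $\mathcal S=\{x\in\mathbb R^n:\|Qx-p\|_2\le r\}$ with $\mathcal S\cap\mathbb Z^n\neq\emptyset$. Let $\hat x$ be a boundary point of $\mathcal S$. Then $$\min_{x\in\mathcal S\cap\mathbb Z^n}\|x-\hat x\|_2\le 2\,\|Q(Q^TQ)^{-1}\|_2\,\mu(Q).$$ Moreover, for every $\alpha\in\mathbb R^n$, $$\min_{x\in\mathcal S\cap\mathbb Z^n}\alpha^Tx-\min_{x\in\mathcal S}\alpha^Tx\le 2\,\|Q(Q^TQ)^{-1}\|_2\,\|\alpha\|_2\,\mu(Q).$$
   Context: For $Q\in\mathbb R^{m\times n}$ of full column rank, $\mu(Q)$ denotes the covering radius of the lattice $Q\mathbb Z^n$: $\mu(Q)=\max_{x\in\mathbb R^n}\min_{z\in\mathbb Z^n}\|Qx-Qz\|_2$. $\|\cdot\|_2$ applied to a matrix is the spectral (operator) norm. *)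

(* Defs.v *)
From HB Require Import structures.
From mathcomp Require Import all_boot all_order all_algebra.
From mathcomp Require Import all_classical all_reals all_analysis.
Unset Printing Implicit Defensive.
Import Order.TTheory GRing.Theory Num.Theory.
Import numFieldNormedType.Exports.
Local Open Scope classical_set_scope.
Local Open Scope ring_scope.

Definition norm2 {R : realType} {n : nat} (v : 'cV[R]_n) : R :=
  Num.sqrt (\sum_(i < n) v i 0 ^+ 2).

Definition dotv {R : realType} {n : nat} (a x : 'cV[R]_n) : R :=
  \sum_(i < n) a i 0 * x i 0.

Definition spec_norm {R : realType} {m n : nat} (A : 'M[R]_(m, n)) : R :=
  sup [set norm2 (A *m x) | x in [set x : 'cV[R]_n | norm2 x <= 1]].

Definition intvecs (R : realType) (n : nat) : set 'cV[R]_n :=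
  [set z | forall i, z i 0 \is a Num.int].

Definition covering_radius {R : realType} {m n : nat} (Q : 'M[R]_(m, n)) : R :=
  sup [set inf [set norm2 (Q *m x - Q *m z) | z in intvecs R n] | x in [set: 'cV[R]_n]].

Definition boundary {T : topologicalType} (A : set T) : set T :=
  closure A `\` interior A.

(* Main.v *)
Require Import Defs.
From HB Require Import structures.
From mathcomp Require Import all_boot all_order all_algebra.
From mathcomp Require Import all_classical all_reals all_analysis.
From mathcomp Require Import ring lra.
Import Order.TTheory GRing.Theory Num.Theory.
Import numFieldNormedType.Exports.
Local Open Scope classical_set_scope.
Local Open Scope ring_scope.

Section Aux.
Context {R : realType}.
Implicit Types (n : nat).

Lemma sqr_normr (x : R) : `|x| ^+ 2 = x ^+ 2.
Proof. exact: real_normK (num_real x). Qed.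

Lemma dotvE {n} (a b : 'cV[R]_n) : dotv a b = (a^T *m b) 0 0.
Proof. by rewrite /dotv mxE; apply: eq_bigr => i _; rewrite mxE. Qed.

Lemma dotvC {n} (a b : 'cV[R]_n) : dotv a b = dotv b a.
Proof. by rewrite /dotv; apply: eq_bigr => i _; rewrite mulrC. Qed.

Lemma dotvDr {n} (a b c : 'cV[R]_n) : dotv c (a + b) = dotv c a + dotv c b.
Proof. by rewrite /dotv -big_split; apply: eq_bigr => i _; rewrite mxE mulrDr. Qed.

Lemma dotvNr {n} (a c : 'cV[R]_n) : dotv c (- a) = - dotv c a.
Proof. by rewrite /dotv -sumrN; apply: eq_bigr => i _; rewrite mxE mulrN. Qed.

Lemma dotvBr {n} (a b c : 'cV[R]_n) : dotv c (a - b) = dotv c a - dotv c b.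
Proof. by rewrite dotvDr dotvNr. Qed.

Lemma dotv0r {n} (c : 'cV[R]_n) : dotv c 0 = 0.
Proof. by rewrite /dotv big1 // => i _; rewrite mxE mulr0. Qed.

Lemma dotv_ge0 {n} (a : 'cV[R]_n) : 0 <= dotv a a.
Proof. by rewrite /dotv; apply: sumr_ge0 => i _; rewrite -expr2 sqr_ge0. Qed.

Lemma norm2E {n} (a : 'cV[R]_n) : norm2 a = Num.sqrt (dotv a a).
Proof. by rewrite /norm2 /dotv; congr Num.sqrt; apply: eq_bigr => i _; rewrite expr2. Qed.

Lemma norm2_ge0 {n} (a : 'cV[R]_n) : 0 <= norm2 a.
Proof. exact: sqrtr_ge0. Qed.

Lemma norm2_sq {n} (a : 'cV[R]_n) : norm2 a ^+ 2 = dotv a a.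
Proof. by rewrite norm2E sqr_sqrtr // dotv_ge0. Qed.

Lemma dotv_eq0 {n} (a : 'cV[R]_n) : dotv a a = 0 -> a = 0.
Proof.
move=> H; apply/matrixP => i j; rewrite (ord1 j) mxE.
have h0 : forall k : 'I_n, xpredT k -> 0 <= a k 0 * a k 0.
  by move=> k _; rewrite -expr2; exact: sqr_ge0.
have := @psumr_eq0P _ _ xpredT (fun i => a i 0 * a i 0) h0 H i isT.
by move=> /eqP; rewrite mulf_eq0 orbb => /eqP.
Qed.

Lemma norm2_eq0 {n} (a : 'cV[R]_n) : norm2 a = 0 -> a = 0.
Proof. by move=> H; apply: dotv_eq0; rewrite -norm2_sq H expr0n. Qed.

Lemma norm2_0 {n} : norm2 (0 : 'cV[R]_n) = 0.
Proof. by rewrite norm2E dotv0r sqrtr0. Qed.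

Lemma dotv_expand {n} (k l : R) (a b : 'cV[R]_n) :
  dotv (k *: a + l *: b) (k *: a + l *: b) =
  k ^+ 2 * dotv a a + 2 * k * l * dotv a b + l ^+ 2 * dotv b b.
Proof.
rewrite /dotv !mulr_sumr -!big_split /=; apply: eq_bigr => i _; rewrite !mxE; ring.
Qed.

Lemma sq_le (x y : R) : 0 <= x -> 0 <= y -> (x <= y) = (x ^+ 2 <= y ^+ 2).
Proof. by move=> x0 y0; rewrite ler_sqr // nnegrE. Qed.

Lemma CS {n} (a b : 'cV[R]_n) : dotv a b <= norm2 a * norm2 b.
Proof.
have [->|a0] := eqVneq a 0.
  by rewrite dotvC dotv0r norm2_0 mul0r.
have [->|b0] := eqVneq b 0.
  by rewrite dotv0r norm2_0 mulr0.
have na : 0 < norm2 a.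
  by rewrite lt_neqAle norm2_ge0 andbT eq_sym; apply/eqP => /norm2_eq0/eqP; rewrite (negbTE a0).
have nb : 0 < norm2 b.
  by rewrite lt_neqAle norm2_ge0 andbT eq_sym; apply/eqP => /norm2_eq0/eqP; rewrite (negbTE b0).
have := dotv_ge0 (norm2 b *: a + (- norm2 a) *: b).
rewrite dotv_expand -!norm2_sq => H.
have : 0 < norm2 a * norm2 b by rewrite mulr_gt0.
nra.
Qed.

Lemma norm2Z {n} (k : R) (a : 'cV[R]_n) : norm2 (k *: a) = `|k| * norm2 a.
Proof.
have -> : k *: a = k *: a + 0 *: a by rewrite scale0r addr0.
rewrite norm2E dotv_expand !expr0n /= !mul0r mulr0 !addr0 mul0r addr0.
rewrite sqrtrM ?sqr_ge0 //.
by rewrite sqrtr_sqr norm2E.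
Qed.

Lemma norm2N {n} (a : 'cV[R]_n) : norm2 (- a) = norm2 a.
Proof. by rewrite -scaleN1r norm2Z normrN normr1 mul1r. Qed.

Lemma norm2D {n} (a b : 'cV[R]_n) : norm2 (a + b) <= norm2 a + norm2 b.
Proof.
rewrite sq_le ?addr_ge0 ?norm2_ge0 //.
have -> : a + b = 1 *: a + 1 *: b by rewrite !scale1r.
rewrite norm2_sq dotv_expand -!norm2_sq.
have := CS a b. have := norm2_ge0 a. have := norm2_ge0 b. nra.
Qed.

Lemma norm2B {n} (a b : 'cV[R]_n) : norm2 (a - b) <= norm2 a + norm2 b.
Proof. by rewrite -(norm2N b) norm2D. Qed.

Lemma dotv_lb {n} (a b : 'cV[R]_n) : - (norm2 a * norm2 b) <= dotv a b.
Proof. by rewrite lerNl -dotvNr -(norm2N b) CS. Qed.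

Lemma dotv_mul {m n} (A : 'M[R]_(m, n)) x y : dotv (A *m x) y = dotv x (A^T *m y).
Proof. by rewrite !dotvE trmx_mul mulmxA. Qed.

Lemma entry_le {n} (x : 'cV[R]_n) i : `|x i 0| <= norm2 x.
Proof.
rewrite sq_le ?normr_ge0 ?norm2_ge0 // sqr_normr norm2_sq /dotv (bigD1 i) //= -expr2.
rewrite lerDl; apply: sumr_ge0 => j _; rewrite -expr2; exact: sqr_ge0.
Qed.

Lemma norm2_bound {n} (v : 'cV[R]_n) (B : R) : (forall i, `|v i 0| <= B) ->
  norm2 v ^+ 2 <= n%:R * B ^+ 2.
Proof.
move=> H; rewrite norm2_sq /dotv.
have -> : n%:R * B ^+ 2 = \sum_(i < n) B ^+ 2 by rewrite sumr_const card_ord mulr_natl.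
apply: ler_sum => i _; rewrite -expr2 -sqr_normr -(sqr_normr B) -sq_le ?normr_ge0 //.
by apply: le_trans (H i) _; rewrite ler_norm.
Qed.


Lemma mx_bound {m n} (A : 'M[R]_(m, n)) :
  exists K, 0 <= K /\ forall x, norm2 (A *m x) <= K * norm2 x.
Proof.
pose C := \sum_(i < m) \sum_(j < n) `|A i j|.
have C0 : 0 <= C by apply: sumr_ge0 => i _; apply: sumr_ge0 => j _.
exists (Num.sqrt m%:R * C); split; first by rewrite mulr_ge0 ?sqrtr_ge0.
move=> x.
have Hi : forall i, `|(A *m x) i 0| <= C * norm2 x.
  move=> i; rewrite mxE; apply: le_trans (ler_norm_sum _ _ _) _.
  apply: (@le_trans _ _ (\sum_(j < n) `|A i j| * norm2 x)).
    by apply: ler_sum => j _; rewrite normrM ler_wpM2l ?normr_ge0 ?entry_le.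
  rewrite -mulr_suml ler_wpM2r ?norm2_ge0 // /C (bigD1 i) //= lerDl.
  by apply: sumr_ge0 => k _; apply: sumr_ge0.
have H := norm2_bound _ _ Hi.
rewrite sq_le ?norm2_ge0 ?mulr_ge0 ?sqrtr_ge0 ?norm2_ge0 //.
apply: le_trans H _; by rewrite !exprMn (sqr_sqrtr (ler0n _ m)) mulrA.
Qed.

Lemma spec_norm_ge0 {m n} (A : 'M[R]_(m, n)) : 0 <= spec_norm A.
Proof.
have [K [K0 HK]] := mx_bound A.
have ub : has_ubound [set norm2 (A *m x) | x in [set x : 'cV[R]_n | norm2 x <= 1]].
  exists K => _ [x /= x1 <-]; apply: le_trans (HK x) _.
  by rewrite -[leRHS]mulr1 ler_wpM2l.
have /ubP H := ub_le_sup ub; apply: H.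
exists 0; first by rewrite /= norm2_0 ler01.
by rewrite mulmx0 norm2_0.
Qed.

Lemma spec_normP {m n} (A : 'M[R]_(m, n)) x : norm2 (A *m x) <= spec_norm A * norm2 x.
Proof.
have [K [K0 HK]] := mx_bound A.
have ub : has_ubound [set norm2 (A *m x) | x in [set x : 'cV[R]_n | norm2 x <= 1]].
  exists K => _ [y /= y1 <-]; apply: le_trans (HK y) _.
  by rewrite -[leRHS]mulr1 ler_wpM2l.
have [x0|xn0] := eqVneq (norm2 x) 0.
  by apply: le_trans (HK x) _; rewrite x0 !mulr0.
have xp : 0 < norm2 x by rewrite lt_neqAle eq_sym xn0 norm2_ge0.
have Hs := ub_le_sup ub.
have Ey : [set norm2 (A *m x) | x in [set x : 'cV[R]_n | norm2 x <= 1]]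
    (norm2 (A *m ((norm2 x)^-1 *: x))).
  exists ((norm2 x)^-1 *: x) => //=.
  by rewrite norm2Z ger0_norm ?invr_ge0 ?norm2_ge0 // mulVf.
have := Hs _ Ey; rewrite -/(spec_norm A).
rewrite -scalemxAr norm2Z ger0_norm ?invr_ge0 ?norm2_ge0 // => H.
by rewrite -ler_pdivrMr // [_ / _]mulrC.
Qed.


Lemma unit_QtQ {m n} (Q : 'M[R]_(m, n)) : \rank Q = n -> Q^T *m Q \in unitmx.
Proof.
move=> rk; rewrite -row_free_unit; apply: inj_row_free => v H.
have rfT : row_free Q^T by rewrite /row_free mxrank_tr rk.
have Qv : Q *m v^T = 0.
  apply: dotv_eq0; rewrite dotvE trmx_mul trmxK mulmxA -(mulmxA v) H mul0mx.
  by rewrite mxE.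
apply: (row_free_inj rfT); rewrite mul0mx.
by have := congr1 trmx Qv; rewrite trmx_mul trmxK trmx0.
Qed.

Lemma xnorm_bound {m n} (Q : 'M[R]_(m, n)) : \rank Q = n -> forall x,
  norm2 x <= spec_norm (Q *m invmx (Q^T *m Q)) * norm2 (Q *m x).
Proof.
move=> rk x; set M := Q *m invmx (Q^T *m Q).
have e : dotv x x = dotv (Q *m x) (M *m x).
  by rewrite dotv_mul /M !mulmxA mulmxV ?unit_QtQ // mul1mx.
have L0 := spec_norm_ge0 M.
have h1 : norm2 x ^+ 2 <= norm2 (Q *m x) * (spec_norm M * norm2 x).
  rewrite norm2_sq e; apply: le_trans (CS _ _) _.
  by rewrite ler_wpM2l ?norm2_ge0 // spec_normP.
have [x0|xn0] := eqVneq (norm2 x) 0.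
  by rewrite x0 mulr_ge0 ?norm2_ge0.
have xp : 0 < norm2 x by rewrite lt_neqAle eq_sym xn0 norm2_ge0.
rewrite -(ler_pM2r xp) -expr2; apply: le_trans h1 _.
by rewrite mulrA [norm2 (Q *m x) * _]mulrC.
Qed.

Definition flv {n} (x : 'cV[R]_n) : 'cV[R]_n := \col_i ((Num.floor (x i 0))%:~R).

Lemma flv_int {n} (x : 'cV[R]_n) : intvecs R n (flv x).
Proof. by move=> i; rewrite mxE intr_int. Qed.

Lemma flv_dist {n} (x : 'cV[R]_n) : norm2 (x - flv x) <= Num.sqrt n%:R.
Proof.
have H : forall i, `|(x - flv x) i 0| <= 1.
  move=> i; rewrite !mxE; have /andP[h1 h2] := floor_itv (x i 0).
  rewrite intrD in h2; rewrite ger0_norm; first by lra.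
  by rewrite subr_ge0.
have := norm2_bound _ _ H; rewrite expr1n mulr1 => h.
by rewrite sq_le ?norm2_ge0 ?sqrtr_ge0 // (sqr_sqrtr (ler0n _ n)).
Qed.

Lemma cov_ub {m n} (Q : 'M[R]_(m, n)) : has_ubound
  [set inf [set norm2 (Q *m x - Q *m z) | z in intvecs R n] | x in [set: 'cV[R]_n]].
Proof.
have [K [K0 HK]] := mx_bound Q.
exists (K * Num.sqrt n%:R) => _ [x _ <-].
have lb : has_lbound [set norm2 (Q *m x - Q *m z) | z in intvecs R n].
  by exists 0 => _ [z _ <-]; exact: norm2_ge0.
have /lbP Hl := ge_inf lb.
apply: le_trans (Hl _ _) _; first by exists (flv x) => //; exact: flv_int.
rewrite -mulmxBr; apply: le_trans (HK _) _.
by rewrite ler_wpM2l // flv_dist.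
Qed.

Lemma cov_approx {m n} (Q : 'M[R]_(m, n)) x eps : 0 < eps ->
  exists z, intvecs R n z /\ norm2 (Q *m x - Q *m z) < covering_radius Q + eps.
Proof.
move=> e0.
have /ubP Hu := ub_le_sup (cov_ub Q).
have h : inf [set norm2 (Q *m x - Q *m z) | z in intvecs R n] < covering_radius Q + eps.
  apply: le_lt_trans (Hu _ _) _; first by exists x.
  by rewrite ltrDl.
have ne : [set norm2 (Q *m x - Q *m z) | z in intvecs R n] !=set0.
  by exists (norm2 (Q *m x - Q *m flv x)); exists (flv x) => //; exact: flv_int.
have [_ [z Iz <-] hz] := inf_lt ne h.
by exists z.
Qed.

Lemma le_eps (a b c : R) : 0 <= c -> (forall d, 0 < d -> a <= b + d * c) -> a <= b.
Proof.
move=> c0 H; apply/ler_addgt0Pr => e e0.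
have c1 : 0 < c + 1 by lra.
apply: le_trans (H (e / (c + 1)) _) _; first by rewrite divr_gt0.
rewrite lerD2l mulrAC ler_pdivrMr //; apply: ler_wpM2l; lra.
Qed.

Lemma vec_id1 {m} (a c u : 'cV[R]_m) s : a - c = - ((c + s *: u) - a) + s *: u.
Proof. by apply/matrixP => i j; rewrite !mxE; ring. Qed.

Lemma vec_id2 {m} (a b c : 'cV[R]_m) s :
  a - b = - ((c + s *: (b - c)) - a) + (s - 1) *: (b - c).
Proof. by apply/matrixP => i j; rewrite !mxE; ring. Qed.

End Aux.

Theorem proposition6p1 (R : realType) (m n : nat) (Q : 'M[R]_(m, n))
    (p : 'cV[R]_m) (r : R) (xhat : 'cV[R]_n) :
  \rank Q = n ->
  0 < r ->
  let S := [set x : 'cV[R]_n | norm2 (Q *m x - p) <= r] in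
  S `&` intvecs R n !=set0 ->
  xhat \in boundary S ->
  inf [set norm2 (x - xhat) | x in S `&` intvecs R n]
    <= 2 * spec_norm (Q *m invmx (Q^T *m Q)) * covering_radius Q /\
  (forall alpha : 'cV[R]_n,
    inf [set dotv alpha x | x in S `&` intvecs R n]
      - inf [set dotv alpha x | x in S]
    <= 2 * spec_norm (Q *m invmx (Q^T *m Q)) * norm2 alpha * covering_radius Q).
Proof.
move=> rk r0 S [z0 [Sz0 Iz0]] hb.
have xb := xnorm_bound Q rk.
set L := spec_norm _ in xb *.
set mu := covering_radius Q.
have L0 : 0 <= L := spec_norm_ge0 _.
pose xc := invmx (Q^T *m Q) *m (Q^T *m p).
pose d := norm2 (Q *m xc - p).
pose rho x := norm2 (Q *m x - Q *m xc).
have cross : Q^T *m (Q *m xc - p) = 0.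
  by rewrite mulmxBr /xc !mulmxA mulmxV ?unit_QtQ // mul1mx subrr.
have pyth : forall x, norm2 (Q *m x - p) ^+ 2 = rho x ^+ 2 + d ^+ 2.
  move=> x.
  have -> : Q *m x - p = 1 *: (Q *m x - Q *m xc) + 1 *: (Q *m xc - p).
    by apply/matrixP => i j; rewrite !mxE; ring.
  rewrite norm2_sq dotv_expand -!norm2_sq.
  have -> : dotv (Q *m x - Q *m xc) (Q *m xc - p) = 0.
    by rewrite -mulmxBr dotv_mul cross dotv0r.
  rewrite /rho /d; ring.
have dr : d ^+ 2 <= r ^+ 2.
  have h1 := pyth z0.
  have h2 : norm2 (Q *m z0 - p) <= r := Sz0.
  have h3 := norm2_ge0 (Q *m z0 - p).
  have h4 : 0 <= rho z0 ^+ 2 by rewrite sqr_ge0.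
  nra.
pose r' := Num.sqrt (r ^+ 2 - d ^+ 2).
have r'2 : r' ^+ 2 = r ^+ 2 - d ^+ 2 by rewrite sqr_sqrtr // subr_ge0.
have r'0 : 0 <= r' := sqrtr_ge0 _.
have inS : forall x, S x <-> rho x <= r'.
  move=> x; rewrite /S /=.
  rewrite (sq_le (norm2 (Q *m x - p)) r) ?norm2_ge0 ?(ltW r0) //.
  rewrite (sq_le (rho x) r') ?norm2_ge0 // pyth r'2 lerBrDr.
  done.
have main : forall x, S x -> forall eps, 0 < eps -> exists z, S z /\ intvecs R n z /\
    norm2 (Q *m z - Q *m x) <= 2 * mu + 2 * eps.
  move=> x Sx eps e0.
  have [w0 [_ hw0]] := cov_approx Q 0 eps e0.
  have hmu : 0 < mu + eps := le_lt_trans (norm2_ge0 _) hw0.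
  have rx : rho x <= r' := (inS x).1 Sx.
  have rz0 : rho z0 <= r' := (inS z0).1 Sz0.
  have [hr|hr] := lerP r' (mu + eps).
    exists z0; split; first by []; split; first by [].
    have -> : Q *m z0 - Q *m x = (Q *m z0 - Q *m xc) - (Q *m x - Q *m xc).
      by apply/matrixP => i j; rewrite !mxE; ring.
    apply: le_trans (norm2B _ _) _; rewrite /rho in rx rz0; lra.
  have r'p : 0 < r' by apply: lt_trans hr.
  pose s := (r' - (mu + eps)) / r'.
  have hs : s * r' = r' - (mu + eps) by rewrite /s divfK // gt_eqF.
  have s0 : 0 <= s by rewrite /s divr_ge0 // subr_ge0 ltW.
  have s1 : s <= 1 by nra.
  pose w := xc + s *: (x - xc).
  have [z [Iz hz]] := cov_approx Q w eps e0.
  have hQw : Q *m w = Q *m xc + s *: (Q *m x - Q *m xc).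
    by rewrite /w mulmxDr -scalemxAr mulmxBr.
  rewrite hQw -/mu in hz.
  exists z; split.
    apply/(inS z); rewrite /rho (vec_id1 (Q *m z) (Q *m xc) (Q *m x - Q *m xc) s).
    apply: le_trans (norm2D _ _) _; rewrite norm2N norm2Z ger0_norm //.
    have : s * rho x <= s * r' by rewrite ler_wpM2l.
    rewrite /rho; lra.
  split=> //; rewrite (vec_id2 (Q *m z) (Q *m x) (Q *m xc) s).
  apply: le_trans (norm2D _ _) _; rewrite norm2N norm2Z ler0_norm ?subr_le0 //.
  have : (1 - s) * rho x <= (1 - s) * r' by rewrite ler_wpM2l // subr_ge0.
  rewrite opprB /rho; lra.
have [hcl _] : closure S xhat /\ ~ interior S xhat by move: hb; rewrite in_setE.
have approx : forall e, 0 < e -> exists x, S x /\ norm2 (x - xhat) <= e.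
  move=> e e0.
  have n0 : 0 < n%:R + 1 :> R by rewrite ltr_wpDl ?ler0n.
  pose dl := e / (n%:R + 1).
  have dl0 : 0 < dl by rewrite divr_gt0.
  have hdl : dl * (n%:R + 1) = e by rewrite /dl divfK // gt_eqF.
  have [x [Sx bx]] := hcl _ (nbhsx_ballx xhat dl dl0).
  exists x; split=> //.
  have Hi : forall i, `|(x - xhat) i 0| <= dl.
    move=> i; case: bx => _ /(_ i 0); rewrite /ball /= => h.
    by rewrite !mxE distrC ltW.
  have h := norm2_bound _ _ Hi.
  rewrite (sq_le _ e) ?norm2_ge0 ?(ltW e0) //; apply: le_trans h _.
  rewrite -hdl; have := ler0n R n; nra.
split.
  apply: (@le_eps _ _ _ (2 * L + 1)); first lra.
  move=> dd d0.
  have [x [Sx hx]] := approx dd d0.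
  have [z [Sz [Iz hz]]] := main x Sx dd d0.
  have lb : has_lbound [set norm2 (x - xhat) | x in S `&` intvecs R n].
    by exists 0 => _ [y _ <-]; exact: norm2_ge0.
  have /lbP Hl := ge_inf lb.
  apply: le_trans (Hl (norm2 (z - xhat)) _) _; first by exists z.
  have -> : z - xhat = (z - x) + (x - xhat).
    by apply/matrixP => i j; rewrite !mxE; ring.
  apply: le_trans (norm2D _ _) _.
  have h1 := xb (z - x); rewrite mulmxBr in h1.
  have h2 : L * norm2 (Q *m z - Q *m x) <= L * (2 * mu + 2 * dd) by rewrite ler_wpM2l.
  lra.
move=> alpha.
have Na := norm2_ge0 alpha.
have lbS : forall x, S x -> dotv alpha xc - norm2 alpha * (L * r') <= dotv alpha x.
  move=> x Sx.
  have -> : dotv alpha x = dotv alpha xc + dotv alpha (x - xc) by rewrite dotvBr; ring.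
  rewrite lerD2l; apply: le_trans (dotv_lb alpha (x - xc)); rewrite lerN2.
  apply: ler_wpM2l => //; apply: le_trans (xb _) _; rewrite mulmxBr.
  by rewrite ler_wpM2l // -/(rho x) -inS.
have lb2 : has_lbound [set dotv alpha x | x in S].
  by exists (dotv alpha xc - norm2 alpha * (L * r')) => _ [y Sy <-]; exact: lbS.
have lb1 : has_lbound [set dotv alpha x | x in S `&` intvecs R n].
  by exists (dotv alpha xc - norm2 alpha * (L * r')) => _ [y [Sy _] <-]; exact: lbS.
apply: (@le_eps _ _ _ (1 + 2 * norm2 alpha * L)); first by nra.
move=> dd d0.
have ne : [set dotv alpha x | x in S] !=set0 by exists (dotv alpha z0); exists z0.
have hlt : inf [set dotv alpha x | x in S] < inf [set dotv alpha x | x in S] + dd.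
  by rewrite ltrDl.
have [_ [x Sx <-] hx] := inf_lt ne hlt.
have [z [Sz [Iz hz]]] := main x Sx dd d0.
have /lbP Hl := ge_inf lb1.
have h0 := Hl (dotv alpha z) (ex_intro2 _ _ z (conj Sz Iz) erefl).
have ez : dotv alpha z = dotv alpha x + dotv alpha (z - x) by rewrite dotvBr; ring.
rewrite ez in h0.
have h1 := CS alpha (z - x).
have h2 := xb (z - x); rewrite mulmxBr in h2.
have h3 : L * norm2 (Q *m z - Q *m x) <= L * (2 * mu + 2 * dd) by rewrite ler_wpM2l.
have h4 : norm2 alpha * norm2 (z - x) <= norm2 alpha * (L * (2 * mu + 2 * dd)).
  by rewrite ler_wpM2l // (le_trans h2 h3).
lra.
Qed.
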